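(* Let $\mathcal{L}_\land\subseteq\{\land,\lor,\to,\lnot,0,1\}$ be a language containing $\land$, and let $\Phi$ be a Sahlqvist quasiequation in $\mathcal{L}_\land$. If an $\mathcal{L}_\land$-subreduct $\boldsymbol{A}$ of a Heyting algebra validates $\Phi$, then the Heyting algebra $\mathsf{Up}(\boldsymbol{A}_\ast)$ validates $\Phi$.
   Context: Formulas are built from variables using $\land,\lor,\to$ (binary), $\lnot$ (unary) and constants $0,1$. An occurrence of a variable in a formula is positive (resp. negative) if the number of negations and antecedents of implications in whose scope it lies is even (resp. odd); a formula is positive (resp. negative) if all variable occurrences in it are positive (resp. negative). A Sahlqvist antecedent is a formula constructed from variables, negative formulas and the constants $0,1$ using only $\land,\lor$. A Sahlqvist implication is a formula that is positive, or of the form $\lnot\varphi$ with $\varphi$ a Sahlqvist antecedent, or of the form $\varphi\to\psi$ with $\varphi$ a Sahlqvist antecedent and $\psi$ positive. A Sahlqvist quasiequation is a universally quantified sentence $\varphi_1\land y\le z\,\&\cdots\&\,\varphi_n\land y\le z\Longrightarrow y\le z$, where $y,z$ are distinct variables not occurring in $\varphi_1,\dots,\varphi_n$, each $\varphi_i$ is built from Sahlqvist implications using only $\land,\lor$, and $a\le b$ abbreviates the equation $a\land b\approx a$; it is in $\mathcal{L}_\land$ if all symbols in the $\varphi_i$ are in $\mathcal{L}_\land$. An $\mathcal{L}_\land$-subreduct of a Heyting algebra is a subalgebra of its reduct to $\mathcal{L}_\land$. For such $\boldsymbol{A}$, a filter is a nonempty upset (w.r.t. $a\le b\iff a\land b=a$)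 closed under $\land$, meet irreducible if proper and not the intersection of two filters both different from it, and $\boldsymbol{A}_\ast$ is the poset of meet irreducible filters under inclusion. For a poset $\mathbb{X}$, $\mathsf{Up}(\mathbb{X})=\langle\mathsf{Up}(\mathbb{X});\cap,\cup,\to,\emptyset,X\rangle$ is the Heyting algebra of upsets with $U\to V=X\smallsetminus{\downarrow}(U\smallsetminus V)$. *)

(* Defs.v *)
From Stdlib Require Import List.
Import ListNotations.

Inductive fm : Type :=
| Var : nat -> fm
| And : fm -> fm -> fm
| Or  : fm -> fm -> fm
| Imp : fm -> fm -> fm
| Neg : fm -> fm
| Bot : fm
| Top : fm.

(** The symbols of the full language {/\, \/, ->, ~, 0, 1}. A sublanguage is a
    predicate [L : sym -> Prop]. *)
Inductive sym : Type := SAnd | SOr | SImp | SNeg | S0 | S1.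

Fixpoint in_lang (L : sym -> Prop) (f : fm) : Prop :=
  match f with
  | Var _ => True
  | And a b => L SAnd /\ in_lang L a /\ in_lang L b
  | Or a b => L SOr /\ in_lang L a /\ in_lang L b
  | Imp a b => L SImp /\ in_lang L a /\ in_lang L b
  | Neg a => L SNeg /\ in_lang L a
  | Bot => L S0
  | Top => L S1
  end.

Fixpoint occurs (n : nat) (f : fm) : Prop :=
  match f with
  | Var m => m = n
  | And a b | Or a b | Imp a b => occurs n a \/ occurs n b
  | Neg a => occurs n a
  | Bot | Top => False
  end.

(** [polar p f]: every variable occurrence in [f] has polarity [p]
    ([true] = positive, i.e. an even number of negations/antecedents of
    implications in whose scope it lies; [false] = negative). *)
Fixpoint polar (p : bool) (f : fm) : Prop :=
  match f with
  | Var _ => p = true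
  | And a b | Or a b => polar p a /\ polar p b
  | Imp a b => polar (negb p) a /\ polar p b
  | Neg a => polar (negb p) a
  | Bot | Top => True
  end.

Definition positive (f : fm) : Prop := polar true f.
Definition negative (f : fm) : Prop := polar false f.

Inductive sahl_ant : fm -> Prop :=
| sa_var : forall n, sahl_ant (Var n)
| sa_neg : forall f, negative f -> sahl_ant f
| sa_bot : sahl_ant Bot
| sa_top : sahl_ant Top
| sa_and : forall a b, sahl_ant a -> sahl_ant b -> sahl_ant (And a b)
| sa_or  : forall a b, sahl_ant a -> sahl_ant b -> sahl_ant (Or a b).

Definition sahl_impl (f : fm) : Prop :=
  positive f
  \/ (exists g, f = Neg g /\ sahl_ant g)
  \/ (exists g h, f = Imp g h /\ sahl_ant g /\ positive h).

Inductive sahl_comb : fm -> Prop :=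
| sc_base : forall f, sahl_impl f -> sahl_comb f
| sc_and : forall a b, sahl_comb a -> sahl_comb b -> sahl_comb (And a b)
| sc_or  : forall a b, sahl_comb a -> sahl_comb b -> sahl_comb (Or a b).

(** A quasiequation
      phi_1 /\ y <= z & ... & phi_n /\ y <= z  ==>  y <= z
    is encoded by the list [qe_prems] = [phi_1; ...; phi_n] and the variable
    indices [qe_y], [qe_z]. *)
Record quasieq : Type := QE { qe_prems : list fm; qe_y : nat; qe_z : nat }.

Definition sahlqvist_qe (L : sym -> Prop) (q : quasieq) : Prop :=
  qe_y q <> qe_z q /\
  (forall phi, In phi (qe_prems q) ->
     sahl_comb phi /\ in_lang L phi /\
     ~ occurs (qe_y q) phi /\ ~ occurs (qe_z q) phi).

Record ops (T : Type) : Type := Ops {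
  o_and : T -> T -> T; o_or : T -> T -> T; o_imp : T -> T -> T;
  o_neg : T -> T; o_bot : T; o_top : T }.
Arguments o_and {T}. Arguments o_or {T}. Arguments o_imp {T}.
Arguments o_neg {T}. Arguments o_bot {T}. Arguments o_top {T}.

Fixpoint eval {T} (o : ops T) (v : nat -> T) (f : fm) : T :=
  match f with
  | Var n => v n
  | And a b => o_and o (eval o v a) (eval o v b)
  | Or a b => o_or o (eval o v a) (eval o v b)
  | Imp a b => o_imp o (eval o v a) (eval o v b)
  | Neg a => o_neg o (eval o v a)
  | Bot => o_bot o
  | Top => o_top o
  end.

(** Validity of a quasiequation in the algebra whose universe is [P] (a subset
    of [T] closed under the relevant operations [o]) and whose equality is [E].
    [a <= b] abbreviates the equation [a /\ b = a]. *)
Definition valid_qe {T} (o : ops T) (P : T -> Prop) (E : T -> T -> Prop)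
    (q : quasieq) : Prop :=
  forall v : nat -> T, (forall n, P (v n)) ->
    (forall phi, In phi (qe_prems q) ->
       let a := o_and o (eval o v phi) (v (qe_y q)) in
       E (o_and o a (v (qe_z q))) a) ->
    E (o_and o (v (qe_y q)) (v (qe_z q))) (v (qe_y q)).

(** A Heyting algebra: a bounded lattice with a residuated implication
    (a /\ b <= c  iff  a <= b -> c), where x <= y iff x /\ y = x. *)
Record HA : Type := MkHA {
  hc :> Type;
  hmeet : hc -> hc -> hc;
  hjoin : hc -> hc -> hc;
  himp : hc -> hc -> hc;
  hbot : hc;
  htop : hc;
  hmeet_comm : forall a b, hmeet a b = hmeet b a;
  hmeet_assoc : forall a b c, hmeet a (hmeet b c) = hmeet (hmeet a b) c;
  hjoin_comm : forall a b, hjoin a b = hjoin b a;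
  hjoin_assoc : forall a b c, hjoin a (hjoin b c) = hjoin (hjoin a b) c;
  hmeet_absorb : forall a b, hmeet a (hjoin a b) = a;
  hjoin_absorb : forall a b, hjoin a (hmeet a b) = a;
  hmeet_top : forall a, hmeet a htop = a;
  hjoin_bot : forall a, hjoin a hbot = a;
  hresiduation : forall a b c,
    hmeet (hmeet a b) c = hmeet a b <-> hmeet a (himp b c) = a
}.

Definition hle (H : HA) (a b : H) : Prop := hmeet H a b = a.

Definition HA_ops (H : HA) : ops H :=
  Ops (hc H) (hmeet H) (hjoin H) (himp H) (fun a => himp H a (hbot H)) (hbot H) (htop H).

(** [S] is (the universe of) an L-subreduct of [H]: a nonempty subset closed
    under the operations of [L]. The algebra A is [S] with the restricted
    operations. *)
Definition subreduct (L : sym -> Prop) (H : HA) (S : H -> Prop) : Prop :=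
  (exists a, S a) /\
  (L SAnd -> forall a b, S a -> S b -> S (hmeet H a b)) /\
  (L SOr -> forall a b, S a -> S b -> S (hjoin H a b)) /\
  (L SImp -> forall a b, S a -> S b -> S (himp H a b)) /\
  (L SNeg -> forall a, S a -> S (himp H a (hbot H))) /\
  (L S0 -> S (hbot H)) /\
  (L S1 -> S (htop H)).

Definition sub_validates (H : HA) (S : H -> Prop) (q : quasieq) : Prop :=
  valid_qe (HA_ops H) S eq q.

Definition filter (H : HA) (S : H -> Prop) (F : H -> Prop) : Prop :=
  (forall a, F a -> S a) /\
  (exists a, F a) /\
  (forall a b, F a -> S b -> hle H a b -> F b) /\
  (forall a b, F a -> F b -> F (hmeet H a b)).

Definition meet_irreducible (H : HA) (S : H -> Prop) (F : H -> Prop) : Prop :=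
  filter H S F /\
  (exists a, S a /\ ~ F a) /\
  ~ (exists G1 G2, filter H S G1 /\ filter H S G2 /\ G1 <> F /\ G2 <> F /\
       F = (fun x => G1 x /\ G2 x)).

Definition Astar (H : HA) (S : H -> Prop) : Type :=
  { F : H -> Prop | meet_irreducible H S F }.

Definition Astar_le (H : HA) (S : H -> Prop) (F G : Astar H S) : Prop :=
  forall x, proj1_sig F x -> proj1_sig G x.

Definition is_upset {X : Type} (le : X -> X -> Prop) (U : X -> Prop) : Prop :=
  forall x y, U x -> le x y -> U y.

Definition up_imp {X : Type} (le : X -> X -> Prop) (U V : X -> Prop) : X -> Prop :=
  fun x => ~ exists y, le x y /\ U y /\ ~ V y.

Definition Up_ops {X : Type} (le : X -> X -> Prop) : ops (X -> Prop) :=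
  Ops (X -> Prop) (fun U V x => U x /\ V x)
      (fun U V x => U x \/ V x)
      (up_imp le)
      (fun U => up_imp le U (fun _ => False))
      (fun _ => False)
      (fun _ => True).

Definition Up_validates {X : Type} (le : X -> X -> Prop) (q : quasieq) : Prop :=
  valid_qe (Up_ops le) (is_upset le) (fun U V => forall x, U x <-> V x) q.

(* Main.v *)
Require Import Defs.
From Stdlib Require Import List Classical FunctionalExtensionality PropExtensionality.
From mathcomp Require classical_sets.
Import ListNotations.

Section HAL.
Variable H : HA.

Lemma hle_refl a : hle H a a.
Proof.
  unfold hle. rewrite <- (hjoin_absorb H a a) at 2. apply hmeet_absorb.
Qed.

Lemma hle_trans a b c : hle H a b -> hle H b c -> hle H a c.
Proof.
  unfold hle; intros E1 E2. rewrite <- E1. rewrite <- hmeet_assoc. rewrite E2. reflexivity.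
Qed.

Lemma hle_antisym a b : hle H a b -> hle H b a -> a = b.
Proof. unfold hle; intros E1 E2. rewrite <- E1. rewrite hmeet_comm. exact E2. Qed.

Lemma meet_lb1 a b : hle H (hmeet H a b) a.
Proof.
  unfold hle. rewrite (hmeet_comm H (hmeet H a b) a). rewrite hmeet_assoc.
  rewrite (hle_refl a). reflexivity.
Qed.

Lemma meet_lb2 a b : hle H (hmeet H a b) b.
Proof.
  unfold hle. rewrite <- hmeet_assoc. rewrite (hle_refl b). reflexivity.
Qed.

Lemma meet_glb x a b : hle H x a -> hle H x b -> hle H x (hmeet H a b).
Proof.
  unfold hle; intros E1 E2. rewrite hmeet_assoc. rewrite E1. exact E2.
Qed.

Lemma le_top a : hle H a (htop H).
Proof. apply hmeet_top. Qed.

Lemma bot_le a : hle H (hbot H) a.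
Proof.
  unfold hle. rewrite <- (hjoin_bot H a). rewrite hjoin_comm. apply hmeet_absorb.
Qed.

Lemma le_join a b : hle H a b <-> hjoin H a b = b.
Proof.
  unfold hle; split; intro E.
  - rewrite <- E. rewrite hjoin_comm. rewrite hmeet_comm. apply hjoin_absorb.
  - rewrite <- E. apply hmeet_absorb.
Qed.

Lemma join_ub1 a b : hle H a (hjoin H a b).
Proof. apply hmeet_absorb. Qed.

Lemma join_ub2 a b : hle H b (hjoin H a b).
Proof. rewrite hjoin_comm. apply hmeet_absorb. Qed.

Lemma join_lub a b c : hle H a c -> hle H b c -> hle H (hjoin H a b) c.
Proof.
  intros E1 E2. apply le_join. apply le_join in E1. apply le_join in E2.
  rewrite <- hjoin_assoc. rewrite E2. exact E1.
Qed.

Lemma resid a b c : hle H (hmeet H a b) c <-> hle H a (himp H b c).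
Proof. apply hresiduation. Qed.

Lemma mp a b : hle H (hmeet H a (himp H a b)) b.
Proof.
  rewrite hmeet_comm. apply resid. apply hle_refl.
Qed.

Lemma meet_mono a b a' b' : hle H a a' -> hle H b b' -> hle H (hmeet H a b) (hmeet H a' b').
Proof.
  intros. apply meet_glb.
  - eapply hle_trans; [apply meet_lb1|]; assumption.
  - eapply hle_trans; [apply meet_lb2|]; assumption.
Qed.

Lemma join_mono a b a' b' : hle H a a' -> hle H b b' -> hle H (hjoin H a b) (hjoin H a' b').
Proof.
  intros. apply join_lub.
  - eapply hle_trans; [eassumption|apply join_ub1].
  - eapply hle_trans; [eassumption|apply join_ub2].
Qed.

Lemma imp_mono a a' b b' : hle H a' a -> hle H b b' -> hle H (himp H a b) (himp H a' b').
Proof.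
  intros. apply resid. eapply hle_trans; [|eassumption].
  eapply hle_trans; [|apply (mp a b)]. rewrite hmeet_comm. apply meet_mono; [assumption|apply hle_refl].
Qed.

Lemma distr a b c : hle H (hmeet H a (hjoin H b c)) (hjoin H (hmeet H a b) (hmeet H a c)).
Proof.
  rewrite hmeet_comm. apply resid. apply join_lub; apply resid; rewrite hmeet_comm.
  - apply join_ub1.
  - apply join_ub2.
Qed.

Lemma meet_neg a : hmeet H a (himp H a (hbot H)) = hbot H.
Proof. apply hle_antisym; [apply mp|apply bot_le]. Qed.

Lemma imp_self_top a b : hle H a b -> himp H a b = htop H.
Proof.
  intros E. apply hle_antisym; [apply le_top|]. apply resid.
  eapply hle_trans; [apply meet_lb2|exact E].
Qed.

End HAL.
Section Filt.
Variable H : HA.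
Variable S : H -> Prop.
Variable L : sym -> Prop.
Hypothesis HS : subreduct L H S.
Hypothesis HL : L SAnd.

Lemma S_ne : exists a, S a. Proof. apply HS. Qed.
Lemma S_and a b : S a -> S b -> S (hmeet H a b). Proof. intros; apply HS; auto. Qed.
Lemma S_or a b : L SOr -> S a -> S b -> S (hjoin H a b). Proof. intros; apply HS; auto. Qed.
Lemma S_imp a b : L SImp -> S a -> S b -> S (himp H a b). Proof. intros; apply HS; auto. Qed.
Lemma S_neg a : L SNeg -> S a -> S (himp H a (hbot H)). Proof. intros; apply HS; auto. Qed.
Lemma S_bot : L S0 -> S (hbot H). Proof. intros; apply HS; auto. Qed.
Lemma S_top : L S1 -> S (htop H). Proof. intros; apply HS; auto. Qed.

Lemma S_bot_neg : L SNeg -> S (hbot H).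
Proof.
  intros N. destruct S_ne as [s Hs]. rewrite <- (meet_neg H s). apply S_and; auto. apply S_neg; auto.
Qed.

Lemma S_top_neg : L SNeg -> S (htop H).
Proof.
  intros N. rewrite <- (imp_self_top H (hbot H) (hbot H) (hle_refl H _)). apply S_neg; auto.
  apply S_bot_neg; auto.
Qed.

Lemma S_top_imp : L SImp -> S (htop H).
Proof.
  intros N. destruct S_ne as [s Hs].
  rewrite <- (imp_self_top H s s (hle_refl H _)). apply S_imp; auto.
Qed.

Definition fS (F : H -> Prop) := Defs.filter H S F.

Lemma f_S F : fS F -> forall a, F a -> S a. Proof. intros [? _]; auto. Qed.
Ltac fs := match goal with
  | [ Hx : ?F ?x, Hf : fS ?F |- S ?x ] => exact (f_S F Hf x Hx)
  end.

Lemma f_ne F : fS F -> exists a, F a. Proof. intros [_ [? _]]; auto. Qed.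
Lemma f_up F : fS F -> forall a b, F a -> S b -> hle H a b -> F b. Proof. intros [_ [_ [? _]]]; eauto. Qed.
Lemma f_meet F : fS F -> forall a b, F a -> F b -> F (hmeet H a b). Proof. intros [_ [_ [_ ?]]]; eauto. Qed.

Lemma f_top F : fS F -> S (htop H) -> F (htop H).
Proof.
  intros HF St. destruct (f_ne F HF) as [a Ha]. eapply f_up; eauto. apply le_top.
Qed.

Lemma f_bot_improper F : fS F -> F (hbot H) -> forall s, S s -> F s.
Proof. intros HF Hb s Hs. eapply f_up; eauto. apply bot_le. Qed.

Lemma proper_nobot F : fS F -> (exists s, S s /\ ~ F s) -> ~ F (hbot H).
Proof. intros HF [s [Hs Hn]] Hb. apply Hn. eapply f_bot_improper; eauto. Qed.

Lemma S_filter : fS S.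
Proof.
  split; [auto|]. split; [apply S_ne|]. split; [auto|]. intros; apply S_and; auto.
Qed.

Definition gen (K : H -> Prop) (a : H) : H -> Prop :=
  fun x => S x /\ exists k, K k /\ hle H (hmeet H k a) x.

Lemma gen_filter K a : fS K -> S a -> fS (gen K a).
Proof.
  intros HK Ha. destruct (f_ne K HK) as [k0 Hk0].
  split; [intros x [? _]; auto|].
  split; [exists (hmeet H k0 a); split; [apply S_and; [fs|auto]|exists k0; split; auto; apply hle_refl]|].
  split.
  - intros x y [Sx [k [Hk Hle]]] Sy Hxy. split; auto. exists k; split; auto. eapply hle_trans; eauto.
  - intros x y [Sx [k [Hk Hle]]] [Sy [k' [Hk' Hle']]]. split; [apply S_and; auto|].
    exists (hmeet H k k'). split; [apply f_meet; auto|]. apply meet_glb.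
    + eapply hle_trans; [|exact Hle]. apply meet_mono; [apply meet_lb1|apply hle_refl].
    + eapply hle_trans; [|exact Hle']. apply meet_mono; [apply meet_lb2|apply hle_refl].
Qed.

Lemma gen_sup K a : fS K -> S a -> forall x, K x -> gen K a x.
Proof.
  intros HK Ha x Hx. split; [fs|]. exists x; split; auto. apply meet_lb1.
Qed.

Lemma gen_a K a : fS K -> S a -> gen K a a.
Proof.
  intros HK Ha. split; auto. destruct (f_ne K HK) as [k Hk]. exists k; split; auto. apply meet_lb2.
Qed.

Definition mirr (F : H -> Prop) := meet_irreducible H S F.

Lemma mirr_f F : mirr F -> fS F. Proof. intros [? _]; auto. Qed.
Lemma mirr_proper F : mirr F -> exists s, S s /\ ~ F s. Proof. intros [_ [? _]]; auto. Qed.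

Lemma mirr_split F G J : mirr F -> fS G -> fS J -> (forall x, F x <-> (G x /\ J x)) ->
  (forall x, G x -> F x) \/ (forall x, J x -> F x).
Proof.
  intros [_ [_ Hn]] HG HJ E.
  destruct (classic (G = F)) as [e|ne].
  - left; subst; auto.
  - destruct (classic (J = F)) as [e|ne2].
    + right; subst; auto.
    + exfalso; apply Hn. exists G, J. split; [auto|]. split; [auto|]. split; [auto|]. split; [auto|].
      apply (functional_extensionality F (fun x => G x /\ J x)); intro x. apply propositional_extensionality. apply E.
Qed.

Lemma irr_gen2 K a b : mirr K -> S a -> S b -> ~ K a -> ~ K b ->
  (forall x, gen K a x -> gen K b x -> K x) -> False.
Proof.
  intros HK Sa Sb Na Nb Hi.
  assert (fK := mirr_f K HK).
  destruct (mirr_split K (gen K a) (gen K b) HK) as [E|E].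
  - apply gen_filter; auto.
  - apply gen_filter; auto.
  - intros x; split; [intros; split; apply gen_sup; auto|intros [? ?]; auto].
  - apply Na, E, gen_a; auto.
  - apply Nb, E, gen_a; auto.
Qed.

Lemma prime_or K a b : mirr K -> L SOr -> S a -> S b -> K (hjoin H a b) -> K a \/ K b.
Proof.
  intros HK LO Sa Sb Kab. assert (fK := mirr_f K HK).
  apply NNPP; intro N. apply not_or_and in N. destruct N as [Na Nb].
  apply (irr_gen2 K a b HK Sa Sb Na Nb).
  intros x [Sx [k1 [Hk1 L1]]] [_ [k2 [Hk2 L2]]].
  eapply f_up; [exact fK| |exact Sx|].
  - apply (f_meet K fK (hmeet H k1 k2) (hjoin H a b)); [apply f_meet; auto|exact Kab].
  - eapply hle_trans; [apply distr|]. apply join_lub.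
    + eapply hle_trans; [|exact L1]. apply meet_mono; [apply meet_lb1|apply hle_refl].
    + eapply hle_trans; [|exact L2]. apply meet_mono; [apply meet_lb2|apply hle_refl].
Qed.

Definition TF (K B : H -> Prop) :=
  forall G J, fS G -> fS J -> (forall x, B x -> G x) -> (forall x, B x -> J x) ->
   (forall x, G x -> J x -> K x) -> (forall x, G x -> K x) \/ (forall x, J x -> K x).

Lemma not_incl (G K : H -> Prop) : ~ (forall x, G x -> K x) -> exists x, G x /\ ~ K x.
Proof.
  intros N. apply NNPP; intro N2. apply N. intros x Gx. apply NNPP; intro Kx. apply N2. eauto.
Qed.

Lemma TF_irr K : mirr K -> TF K K.
Proof.
  intros HK G J fG fJ BG BJ I. apply (mirr_split K G J HK fG fJ).
  intros x; split; [auto|intros [? ?]; auto].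
Qed.

Lemma TF_or K : mirr K -> L SOr -> TF K (fun _ => False).
Proof.
  intros HK LO G J fG fJ _ _ I. apply NNPP; intro N. apply not_or_and in N. destruct N as [N1 N2].
  apply not_incl in N1. apply not_incl in N2. destruct N1 as [g [Gg Kg]]. destruct N2 as [j [Jj Kj]].
  assert (Sg : S g) by (fs). assert (Sj : S j) by (fs).
  assert (Sgj : S (hjoin H g j)) by (apply S_or; auto).
  destruct (prime_or K g j HK LO Sg Sj) as [?|?]; auto.
  apply I; eapply f_up; eauto; [apply join_ub1|apply join_ub2].
Qed.

Lemma TF_imp K : mirr K -> L SImp -> TF K (fun _ => False).
Proof.
  intros HK LI G J fG fJ _ _ I. apply NNPP; intro N. apply not_or_and in N. destruct N as [N1 N2].
  apply not_incl in N1. apply not_incl in N2. destruct N1 as [g [Gg Kg]]. destruct N2 as [j [Jj Kj]].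
  assert (fK := mirr_f K HK).
  assert (Sg : S g) by (fs). assert (Sj : S j) by (fs).
  apply (irr_gen2 K g j HK Sg Sj Kg Kj).
  intros x [Sx [k1 [Hk1 L1]]] [_ [k2 [Hk2 L2]]].
  set (k := hmeet H k1 k2).
  assert (Kk : K k) by (apply f_meet; auto).
  assert (Sk : S k) by (fs).
  assert (Ki : K (himp H k x)).
  { apply I.
    - eapply f_up; eauto. apply S_imp; auto. apply resid. rewrite hmeet_comm.
      eapply hle_trans; [|exact L1]. apply meet_mono; [apply meet_lb1|apply hle_refl].
    - eapply f_up; eauto. apply S_imp; auto. apply resid. rewrite hmeet_comm.
      eapply hle_trans; [|exact L2]. apply meet_mono; [apply meet_lb2|apply hle_refl]. }
  eapply f_up; [exact fK| |exact Sx|apply (mp H k x)]. apply f_meet; auto.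
Qed.

Definition maxf (M : H -> Prop) :=
  fS M /\ ~ M (hbot H) /\
  forall G, fS G -> (forall x, M x -> G x) -> ~ G (hbot H) -> forall x, G x -> M x.

Lemma maxf_neg M g : L SNeg -> maxf M -> S g -> ~ M g -> M (himp H g (hbot H)).
Proof.
  intros LN [fM [Nb Mx]] Sg Ng.
  destruct (classic (gen M g (hbot H))) as [Gb|Gb].
  - destruct Gb as [_ [k [Hk Hle]]]. eapply f_up; eauto. apply S_neg; auto. apply resid; auto.
  - exfalso. apply Ng. apply (Mx (gen M g)); auto. apply gen_filter; auto. apply gen_sup; auto.
    apply gen_a; auto.
Qed.

Lemma TF_max M : maxf M -> L SNeg -> TF M (fun _ => False).
Proof.
  intros HM LN G J fG fJ _ _ I. apply NNPP; intro N. apply not_or_and in N. destruct N as [N1 N2].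
  apply not_incl in N1. apply not_incl in N2. destruct N1 as [g [Gg Kg]]. destruct N2 as [j [Jj Kj]].
  destruct HM as [fM [Nb Mx]] eqn:EM.
  assert (Sg : S g) by (fs). assert (Sj : S j) by (fs).
  assert (M1 := maxf_neg M g LN HM Sg Kg).
  assert (M2 := maxf_neg M j LN HM Sj Kj).
  set (t := hmeet H (himp H g (hbot H)) (himp H j (hbot H))).
  assert (Mt : M t) by (apply f_meet; auto).
  assert (St : S t) by (fs).
  assert (Snt : S (himp H t (hbot H))) by (apply S_neg; auto).
  assert (Mnt : M (himp H t (hbot H))).
  { apply I.
    - eapply f_up; eauto. apply resid.
      eapply hle_trans; [|apply (mp H g (hbot H))]. apply meet_mono; [apply hle_refl|apply meet_lb1].
    - eapply f_up; eauto. apply resid.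
      eapply hle_trans; [|apply (mp H j (hbot H))]. apply meet_mono; [apply hle_refl|apply meet_lb2]. }
  apply Nb. rewrite <- (meet_neg H t). apply f_meet; auto.
Qed.

Lemma list_prime (K B : H -> Prop) : fS K -> (exists s, S s /\ ~ K s) -> (forall x, B x -> S x) ->
  forall Gs : list (H -> Prop), (forall G, In G Gs -> fS G /\ forall x, B x -> G x) ->
  (exists t0, S t0 /\ forall G, In G Gs -> G t0) ->
  (Gs = [] \/ TF K B) ->
  (forall x, S x -> (forall G, In G Gs -> G x) -> K x) -> exists G, In G Gs /\ forall x, G x -> K x.
Proof.
  intros fK PK BS Gs. induction Gs as [|G rest IH]; intros HG [t0 [St0 Ht0]] HT HI.
  - exfalso. destruct PK as [s [Ss Ns]]. apply Ns. apply HI; auto. intros G [].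
  - destruct HT as [E|HT]; [discriminate|].
    set (J := fun x => S x /\ forall G', In G' rest -> G' x).
    assert (fJ : fS J).
    { split; [intros x [? _]; auto|]. split; [exists t0; split; auto; intros; apply Ht0; simpl; auto|].
      split.
      - intros u w [Su Hu] Sw Huw. split; auto. intros G' HG'.
        destruct (HG G' (or_intror HG')) as [fG' _]. apply (f_up G' fG' u w); auto; apply Hu; auto.
      - intros u w [Su Hu] [Sw Hw]. split; [apply S_and; auto|]. intros G' HG'.
        destruct (HG G' (or_intror HG')) as [fG' _]. apply f_meet; auto; [apply Hu|apply Hw]; auto. }
    destruct (HG G (or_introl eq_refl)) as [fG BG].
    destruct (HT G J fG fJ BG) as [E|E].
    + intros x Bx. unfold J. split; auto. intros G' HG'. apply (HG G' (or_intror HG')); auto.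
    + unfold J. intros y Gy [Sy Jy]. apply HI; auto. intros G' [<-|HG']; [exact Gy|apply Jy; exact HG'].
    + exists G; split; simpl; auto.
    + destruct (IH) as [G' [HG' E']].
      * intros G' HG'; apply HG; simpl; auto.
      * exists t0; split; auto; intros; apply Ht0; simpl; auto.
      * right; auto.
      * intros x Sx Hx. apply E. unfold J. split; auto.
      * exists G'; split; simpl; auto.
Qed.

End Filt.
Section Zorn.
Variable H : HA.
Variable S : H -> Prop.
Variable L : sym -> Prop.
Hypothesis HS : subreduct L H S.
Hypothesis HL : L SAnd.

Ltac fs := match goal with
  | [ Hx : ?F ?x, Hf : fS H S ?F |- S ?x ] => exact (f_S H S F Hf x Hx)
  end.

Lemma zorn_filter (K Dp : H -> Prop) : fS H S K -> (forall x, K x -> ~ Dp x) ->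
  exists G, fS H S G /\ (forall x, K x -> G x) /\ (forall x, G x -> ~ Dp x) /\
   forall G', fS H S G' -> (forall x, G x -> G' x) -> (forall x, G' x -> ~ Dp x) -> forall x, G' x -> G x.
Proof.
  intros fK KD.
  set (Good := fun A : H -> Prop => fS H S A /\ (forall x, K x -> A x) /\ (forall x, A x -> ~ Dp x)).
  set (P := fun A : H -> Prop => (forall x, A x -> K x) \/ Good A).
  destruct (@classical_sets.Zorn_bigcup (hc H) P) as [A [PA MA]].
  - intros F FP Ftot.
    destruct (classic (exists X0, F X0 /\ Good X0)) as [[X0 [FX0 GX0]]|NG].
    + right.
      assert (key : forall x, classical_sets.bigcup F (fun X => X) x -> exists X, F X /\ Good X /\ X x).
      { intros x [X FX Xx]. destruct (FP X FX) as [XK|GX].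
        - exists X0; split; auto; split; auto. apply GX0; auto.
        - exists X; auto. }
      destruct GX0 as [fX0 [KX0 DX0]].
      split; [split|split].
      * intros x Ux. destruct (key x Ux) as [X [_ [[fX _] Xx]]]. fs.
      * split; [destruct (f_ne H S X0 fX0) as [a Ha]; exists a; exists X0; auto|]. split.
        -- intros x y Ux Sy Hxy. destruct (key x Ux) as [X [FX [[fX _] Xx]]]. exists X; auto.
           apply (f_up H S X fX x y); auto.
        -- intros x y Ux Uy. destruct (key x Ux) as [X1 [F1 [[f1 _] X1x]]].
           destruct (key y Uy) as [X2 [F2 [[f2 _] X2y]]].
           destruct (Ftot X1 X2 F1 F2) as [I|I].
           ++ exists X2; [exact F2|]. apply (f_meet H S X2 f2); [apply I; exact X1x|exact X2y].
           ++ exists X1; [exact F1|]. apply (f_meet H S X1 f1); [exact X1x|apply I; exact X2y].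
      * intros x Kx. exists X0; auto.
      * intros x Ux. destruct (key x Ux) as [X [_ [[_ [_ DX]] Xx]]]. apply DX; auto.
    + left. intros x [X FX Xx]. destruct (FP X FX) as [XK|GX]; auto.
      exfalso; apply NG; exists X; auto.
  - assert (GA : Good A).
    { destruct PA as [AK|GA]; auto.
      destruct (classic (forall x, K x -> A x)) as [KA|NKA].
      - assert (E : forall x, A x <-> K x) by (intro x; split; auto).
        split; [|split; [exact KA|intros x Ax; apply KD; apply AK; exact Ax]].
        destruct fK as [a [b [c d]]]. split; [intros; apply a, E; auto|]. split.
        + destruct b as [x Kx]; exists x; apply E; auto.
        + split; [intros x y Ax Sy Hxy; apply E; apply (c x y); auto; apply E; auto|].
            intros x y Ax Ay; apply E; apply d; apply E; auto.
      - exfalso. apply (MA K); [split; [exact AK|exact NKA]|].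
        right. split; auto. }
    destruct GA as [fA [KA DA]].
    exists A. split; auto. split; auto. split; auto.
    intros G' fG' AG' DG' x G'x.
    apply NNPP; intro NAx. apply (MA G').
    + split; [exact AG'|]. intro I. apply NAx. apply I; auto.
    + right. split; [exact fG'|]. split; [intros y Ky; apply AG', KA; exact Ky|exact DG'].
Qed.

Lemma zorn_mirr (K Dp : H -> Prop) : fS H S K -> (forall x, K x -> ~ Dp x) ->
  (forall x, Dp x -> S x) -> (exists d, Dp d) ->
  (forall d1 d2, Dp d1 -> Dp d2 -> exists d, Dp d /\ hle H d1 d /\ hle H d2 d) ->
  exists G, mirr H S G /\ (forall x, K x -> G x) /\ (forall x, G x -> ~ Dp x) /\
   forall G', fS H S G' -> (forall x, G x -> G' x) -> (forall x, G' x -> ~ Dp x) -> forall x, G' x -> G x.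
Proof.
  intros fK KD DS [d0 Hd0] Ddir.
  destruct (zorn_filter K Dp fK KD) as [G [fG [KG [GD MG]]]].
  exists G. split; [|auto].
  split; [exact fG|]. split.
  - exists d0. split; auto. intro Gd. apply (GD d0); auto.
  - intros [G1 [G2 [f1 [f2 [n1 [n2 E]]]]]].
    assert (sub1 : forall x, G x -> G1 x) by (intros x Gx; rewrite E in Gx; apply Gx).
    assert (sub2 : forall x, G x -> G2 x) by (intros x Gx; rewrite E in Gx; apply Gx).
    assert (h1 : exists x, G1 x /\ Dp x).
    { apply NNPP; intro N. apply n1.
      apply (functional_extensionality G1 G); intro x. apply propositional_extensionality. split.
      - apply (MG G1 f1 sub1). intros y G1y Dy. apply N. eauto.
      - apply sub1. }
    assert (h2 : exists x, G2 x /\ Dp x).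
    { apply NNPP; intro N. apply n2.
      apply (functional_extensionality G2 G); intro x. apply propositional_extensionality. split.
      - apply (MG G2 f2 sub2). intros y G2y Dy. apply N. eauto.
      - apply sub2. }
    destruct h1 as [x1 [G1x Dx1]]. destruct h2 as [x2 [G2x Dx2]].
    destruct (Ddir x1 x2 Dx1 Dx2) as [d [Dd [L1 L2]]].
    apply (GD d); auto. rewrite E. split.
    + apply (f_up H S G1 f1 x1 d); auto.
    + apply (f_up H S G2 f2 x2 d); auto.
Qed.

Lemma exists_maxf (K : H -> Prop) : L SNeg -> fS H S K -> ~ K (hbot H) ->
  exists M, mirr H S M /\ maxf H S M /\ forall x, K x -> M x.
Proof.
  intros LN fK Kb.
  destruct (zorn_mirr K (fun x => x = hbot H) fK) as [G [mG [KG [GD MG]]]].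
  - intros x Kx E; subst; auto.
  - intros x E; subst; apply (S_bot_neg H S L HS HL LN).
  - exists (hbot H); auto.
  - intros d1 d2 E1 E2; subst. exists (hbot H); split; auto; split; apply hle_refl.
  - exists G. split; auto. split; auto. split; [apply mirr_f; auto|]. split.
    + intro Gb. apply (GD (hbot H)); auto.
    + intros G' fG' GG' Nb. apply MG; auto. intros x G'x E; subst; auto.
Qed.

End Zorn.
Section Up.
Variable H : HA.
Variable S : H -> Prop.
Variable L : sym -> Prop.
Hypothesis HS : subreduct L H S.
Hypothesis HL : L SAnd.

Ltac fs := match goal with
  | [ Hx : ?F ?x, Hf : fS H S ?F |- S ?x ] => exact (f_S H S F Hf x Hx)
  end.

Notation X := (Astar H S).
Notation le := (Astar_le H S).
Definition pt (K : X) : H -> Prop := proj1_sig K.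
Lemma pt_mirr (K : X) : mirr H S (pt K). Proof. exact (proj2_sig K). Qed.
Lemma pt_f (K : X) : fS H S (pt K). Proof. apply mirr_f, pt_mirr. Qed.
Lemma pt_proper (K : X) : exists s, S s /\ ~ pt K s. Proof. apply mirr_proper, pt_mirr. Qed.
Lemma pt_nobot (K : X) : ~ pt K (hbot H).
Proof. apply (proper_nobot H S); [apply pt_f|apply pt_proper]. Qed.

Lemma le_reflX (K : X) : le K K. Proof. unfold Astar_le; auto. Qed.
Lemma le_transX (K1 K2 K3 : X) : le K1 K2 -> le K2 K3 -> le K1 K3.
Proof. unfold Astar_le; auto. Qed.

Definition UE (W : nat -> X -> Prop) (f : fm) : X -> Prop := eval (Up_ops le) W f.

Lemma up_imp_upset (U U' : X -> Prop) : is_upset le (up_imp le U U').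
Proof.
  intros x y Hx Hxy [z [yz [Uz NU]]]. apply Hx. exists z. split; auto. eapply le_transX; eauto.
Qed.

Lemma eval_upset W : (forall n, is_upset le (W n)) -> forall f, is_upset le (UE W f).
Proof.
  intros HW f; induction f; simpl; unfold UE; simpl.
  - apply HW.
  - intros x y [A B] Hxy; split; [eapply IHf1|eapply IHf2]; eauto.
  - intros x y [A|B] Hxy; [left; eapply IHf1|right; eapply IHf2]; eauto.
  - apply up_imp_upset.
  - apply up_imp_upset.
  - intros x y [].
  - intros x y _ _; exact I.
Qed.

Lemma eval_mono_up W V : (forall n K, W n K -> V n K) ->
  forall f p, polar p f -> if p then (forall K, UE W f K -> UE V f K) else (forall K, UE V f K -> UE W f K).
Proof.
  intros HWV f; induction f; intros p Hp; destruct p; simpl in *; unfold UE in *; simpl in *;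
   try discriminate; try tauto.
  - intros K. apply HWV.
  - destruct Hp as [H1 H2]. intros K [A B]. split; [apply (IHf1 true)|apply (IHf2 true)]; auto.
  - destruct Hp as [H1 H2]. intros K [A B]. split; [apply (IHf1 false)|apply (IHf2 false)]; auto.
  - destruct Hp as [H1 H2]. intros K [A|B]; [left; apply (IHf1 true)|right; apply (IHf2 true)]; auto.
  - destruct Hp as [H1 H2]. intros K [A|B]; [left; apply (IHf1 false)|right; apply (IHf2 false)]; auto.
  - destruct Hp as [H1 H2]. intros K Hi [y [Ky [A B]]]. apply Hi. exists y. split; auto. split.
    + apply (IHf1 false); auto.
    + intro C; apply B. apply (IHf2 true); auto.
  - destruct Hp as [H1 H2]. intros K Hi [y [Ky [A B]]]. apply Hi. exists y. split; auto. split.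
    + apply (IHf1 true); auto.
    + intro C; apply B. apply (IHf2 false); auto.
  - intros K Hi [y [Ky [A B]]]. apply Hi. exists y. split; auto. split; auto. apply (IHf false); auto.
  - intros K Hi [y [Ky [A B]]]. apply Hi. exists y. split; auto. split; auto. apply (IHf true); auto.
Qed.

Lemma maxf_top (M K : X) : maxf H S (pt M) -> le M K -> le K M.
Proof.
  intros [fM [Nb Mx]] MK. intros x Kx. apply (Mx (pt K)); auto. apply pt_f. apply pt_nobot.
Qed.

Lemma up_imp_max (M : X) (U U' : X -> Prop) : maxf H S (pt M) -> is_upset le U -> is_upset le U' ->
  (up_imp le U U' M <-> (U M -> U' M)).
Proof.
  intros HM HU HU'. split.
  - intros Hi UM. apply NNPP; intro N. apply Hi. exists M. split; [apply le_reflX|auto].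
  - intros Hi [y [My [Uy NU]]]. apply NU. apply (HU' M); [|auto]. apply Hi. apply (HU y); auto.
    apply maxf_top; auto.
Qed.

Lemma max_lemma W V : (forall n, is_upset le (W n)) -> (forall n, is_upset le (V n)) ->
  (forall n M, maxf H S (pt M) -> W n M -> V n M) ->
  forall f p, polar p f -> forall M, maxf H S (pt M) ->
   if p then (UE W f M -> UE V f M) else (UE V f M -> UE W f M).
Proof.
  intros HW HV HWV f; induction f; intros p Hp M HM; destruct p; simpl in *; try discriminate; try tauto.
  - unfold UE; simpl. apply HWV; auto.
  - destruct Hp as [H1 H2]. unfold UE in *; simpl. intros [A B]. split; [apply (IHf1 true)|apply (IHf2 true)]; auto.
  - destruct Hp as [H1 H2]. unfold UE in *; simpl. intros [A B]. split; [apply (IHf1 false)|apply (IHf2 false)]; auto.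
  - destruct Hp as [H1 H2]. unfold UE in *; simpl. intros [A|B]; [left; apply (IHf1 true)|right; apply (IHf2 true)]; auto.
  - destruct Hp as [H1 H2]. unfold UE in *; simpl. intros [A|B]; [left; apply (IHf1 false)|right; apply (IHf2 false)]; auto.
  - destruct Hp as [H1 H2]. change (UE W (Imp f1 f2) M) with (up_imp le (UE W f1) (UE W f2) M).
    change (UE V (Imp f1 f2) M) with (up_imp le (UE V f1) (UE V f2) M).
    rewrite !up_imp_max by (auto; apply eval_upset; auto).
    intros A B. apply (IHf2 true); auto. apply A. apply (IHf1 false); auto.
  - destruct Hp as [H1 H2]. change (UE W (Imp f1 f2) M) with (up_imp le (UE W f1) (UE W f2) M).
    change (UE V (Imp f1 f2) M) with (up_imp le (UE V f1) (UE V f2) M).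
    rewrite !up_imp_max by (auto; apply eval_upset; auto).
    intros A B. apply (IHf2 false); auto. apply A. apply (IHf1 true); auto.
  - change (UE W (Neg f) M) with (up_imp le (UE W f) (fun _ => False) M).
    change (UE V (Neg f) M) with (up_imp le (UE V f) (fun _ => False) M).
    rewrite !up_imp_max by (auto; try (apply eval_upset; auto); intros ? ? [] ; fail).
    intros A B. apply A. apply (IHf false); auto.
  - change (UE W (Neg f) M) with (up_imp le (UE W f) (fun _ => False) M).
    change (UE V (Neg f) M) with (up_imp le (UE V f) (fun _ => False) M).
    rewrite !up_imp_max by (auto; try (apply eval_upset; auto); intros ? ? [] ; fail).
    intros A B. apply A. apply (IHf true); auto.
Qed.

End Up.
Section Dir.
Variable H : HA.
Variable S : H -> Prop.
Variable L : sym -> Prop.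
Hypothesis HS : subreduct L H S.
Hypothesis HL : L SAnd.

Notation X := (Astar H S).
Notation le := (Astar_le H S).
Notation pt := (pt H S).

Definition hev (a : nat -> H) (f : fm) : H := eval (HA_ops H) a f.
Definition vle (a b : nat -> H) := forall n, hle H (a n) (b n).

Lemma eval_S a : (forall n, S (a n)) -> forall f, in_lang L f -> S (hev a f).
Proof.
  intros Ha f; induction f; simpl; intros Hl; unfold hev in *; simpl.
  - auto.
  - destruct Hl as [? [? ?]]. apply (S_and H S L HS HL); auto.
  - destruct Hl as [? [? ?]]. apply (S_or H S L HS); auto.
  - destruct Hl as [? [? ?]]. apply (S_imp H S L HS); auto.
  - destruct Hl as [? ?]. apply (S_neg H S L HS); auto.
  - apply (S_bot H S L HS); auto.
  - apply (S_top H S L HS); auto.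
Qed.

Lemma hev_mono a b : vle a b -> forall f p, polar p f ->
  if p then hle H (hev a f) (hev b f) else hle H (hev b f) (hev a f).
Proof.
  intros Hab f; induction f; intros p Hp; destruct p; simpl in *; unfold hev in *; simpl;
    try discriminate; try apply hle_refl.
  - apply Hab.
  - destruct Hp. apply meet_mono; [apply (IHf1 true)|apply (IHf2 true)]; auto.
  - destruct Hp. apply meet_mono; [apply (IHf1 false)|apply (IHf2 false)]; auto.
  - destruct Hp. apply join_mono; [apply (IHf1 true)|apply (IHf2 true)]; auto.
  - destruct Hp. apply join_mono; [apply (IHf1 false)|apply (IHf2 false)]; auto.
  - destruct Hp. apply imp_mono; [apply (IHf1 false)|apply (IHf2 true)]; auto.
  - destruct Hp. apply imp_mono; [apply (IHf1 true)|apply (IHf2 false)]; auto.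
  - apply imp_mono; [apply (IHf false); auto|apply hle_refl].
  - apply imp_mono; [apply (IHf true); auto|apply hle_refl].
Qed.

Variable D : (nat -> H) -> Prop.
Hypothesis Dne : exists a, D a.
Hypothesis Ddir : forall a b, D a -> D b -> exists c, D c /\ vle c a /\ vle c b.
Hypothesis DS : forall a, D a -> forall n, S (a n).

Definition WD (n : nat) (K : X) : Prop := forall a, D a -> pt K (a n).
Definition Ev (P : (nat -> H) -> Prop) := exists a0, D a0 /\ forall a, D a -> vle a a0 -> P a.

Lemma vle_trans a b c : vle a b -> vle b c -> vle a c.
Proof. intros A B n. eapply hle_trans; eauto. Qed.
Lemma vle_refl a : vle a a. Proof. intro; apply hle_refl. Qed.

Lemma Ev_and P Q : Ev P -> Ev Q -> Ev (fun a => P a /\ Q a).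
Proof.
  intros [a1 [D1 P1]] [a2 [D2 P2]]. destruct (Ddir a1 a2 D1 D2) as [c [Dc [c1 c2]]].
  exists c. split; auto. intros a Da ac. split; [apply P1|apply P2]; auto; eapply vle_trans; eauto.
Qed.

Lemma Ev_mono (P Q : (nat -> H) -> Prop) : (forall a, D a -> P a -> Q a) -> Ev P -> Ev Q.
Proof. intros PQ [a0 [D0 P0]]. exists a0; split; auto. Qed.

Lemma Ev_ex P : Ev P -> exists a, D a /\ P a.
Proof. intros [a0 [D0 P0]]. exists a0; split; auto. apply P0; auto. apply vle_refl. Qed.

Lemma Ev_all (P : (nat -> H) -> Prop) : (forall a, D a -> P a) -> Ev P.
Proof. intros HP. destruct Dne as [a0 D0]. exists a0; split; auto. Qed.

Lemma WD_upset n : is_upset le (WD n).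
Proof. intros K K' HK KK' a Da. apply KK'. apply HK; auto. Qed.

Ltac fs := match goal with
  | [ Hx : ?F ?x, Hf : fS H S ?F |- S ?x ] => exact (f_S H S F Hf x Hx)
  end.

Lemma ZH (K : X) (fa fb : (nat -> H) -> H) :
  (forall a, D a -> S (fa a) /\ S (fb a) /\ S (himp H (fa a) (fb a))) ->
  (forall a c, D a -> D c -> vle c a -> hle H (fa c) (fa a) /\ hle H (fb a) (fb c)) ->
  (forall a, D a -> ~ pt K (himp H (fa a) (fb a))) ->
  exists G : X, le K G /\ (forall a, D a -> pt G (fa a)) /\ (forall a, D a -> ~ pt G (fb a)).
Proof.
  intros HSab Hmon HnK.
  assert (fK := pt_f H S K).
  set (Kg := fun x => S x /\ exists k a, pt K k /\ D a /\ hle H (hmeet H k (fa a)) x).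
  set (Dp := fun x => exists a, D a /\ x = fb a).
  destruct Dne as [a0 D0]. destruct (f_ne H S _ fK) as [k0 Hk0].
  assert (fKg : fS H S Kg).
  { split; [intros x [? _]; auto|]. split.
    - exists (hmeet H k0 (fa a0)). split; [apply (S_and H S L HS HL); [exact (f_S H S _ fK k0 Hk0)|apply HSab; auto]|].
      exists k0, a0. split; auto. split; auto. apply hle_refl.
    - split.
      + intros x y [Sx [k [a [Kk [Da Hle]]]]] Sy Hxy. split; auto. exists k, a. split; auto. split; auto.
        eapply hle_trans; eauto.
      + intros x y [Sx [k [a [Kk [Da Hle]]]]] [Sy [k' [a' [Kk' [Da' Hle']]]]].
        split; [apply (S_and H S L HS HL); auto|].
        destruct (Ddir a a' Da Da') as [c [Dc [ca ca']]].
        exists (hmeet H k k'), c. split; [apply (f_meet H S); auto|]. split; auto.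
        destruct (Hmon a c Da Dc ca) as [m1 _]. destruct (Hmon a' c Da' Dc ca') as [m2 _].
        apply meet_glb.
        * eapply hle_trans; [|exact Hle]. apply meet_mono; [apply meet_lb1|exact m1].
        * eapply hle_trans; [|exact Hle']. apply meet_mono; [apply meet_lb2|exact m2]. }
  destruct (zorn_mirr H S Kg Dp fKg) as [G [mG [KgG [GD _]]]].
  - intros x [Sx [k [a [Kk [Da Hle]]]]] [b [Db E]]. subst x.
    destruct (Ddir a b Da Db) as [c [Dc [ca cb]]].
    destruct (Hmon a c Da Dc ca) as [m1 _]. destruct (Hmon b c Db Dc cb) as [_ m2].
    apply (HnK c Dc). apply (f_up H S (pt K) fK k); auto; [apply HSab; auto|].
    apply resid. eapply hle_trans; [|exact m2]. eapply hle_trans; [|exact Hle].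
    apply meet_mono; [apply hle_refl|exact m1].
  - intros x [a [Da E]]; subst; apply HSab; auto.
  - exists (fb a0), a0; auto.
  - intros d1 d2 [a1 [D1 E1]] [a2 [D2 E2]]; subst.
    destruct (Ddir a1 a2 D1 D2) as [c [Dc [c1 c2]]]. exists (fb c). split; [exists c; auto|].
    split; [apply (Hmon a1 c)|apply (Hmon a2 c)]; auto.
  - exists (exist _ G mG). split; [|split].
    + intros x Kx. apply KgG. split; [fs|]. exists x, a0. split; auto. split; auto. apply meet_lb1.
    + intros a Da. apply KgG. split; [apply HSab; auto|]. exists k0, a. split; auto. split; auto. apply meet_lb2.
    + intros a Da Gb. apply (GD (fb a)); auto. exists a; auto.
Qed.

Definition WE (f : fm) : X -> Prop := UE H S WD f.

Lemma ptS (K : X) x : pt K x -> S x.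
Proof. intro; exact (f_S H S _ (pt_f H S K) x H0). Qed.

Lemma pt_up (K : X) x y : pt K x -> S y -> hle H x y -> pt K y.
Proof. apply (f_up H S (pt K) (pt_f H S K)). Qed.

Lemma pt_meet (K : X) x y : pt K x -> pt K y -> pt K (hmeet H x y).
Proof. apply (f_meet H S (pt K) (pt_f H S K)). Qed.

Lemma hevS a f : D a -> in_lang L f -> S (hev a f).
Proof. intros Da Hl. apply eval_S; auto. Qed.

Lemma PN : forall f, in_lang L f -> forall p, polar p f -> forall K : X,
  if p then (~ WE f K -> Ev (fun a => ~ pt K (hev a f)))
  else (WE f K -> Ev (fun a => pt K (hev a f))).
Proof.
  induction f; intros Hl p Hp K; destruct p; simpl in Hp; try discriminate;
    unfold WE, UE in *; simpl in *.
  -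
    intros N. unfold WD in N. apply not_all_ex_not in N. destruct N as [a0 N].
    apply imply_to_and in N. destruct N as [Da0 N].
    exists a0. split; auto. intros a Da aa0 Ka. apply N. apply (pt_up K (a n)); auto.
  -
    destruct Hl as [_ [l1 l2]]. destruct Hp as [p1 p2]. intros N.
    apply not_and_or in N. destruct N as [N|N].
    + apply (Ev_mono _ _ (fun a Da A B => A (pt_up K _ _ B (hevS a f1 Da l1) (meet_lb1 H _ _)))).
      exact (IHf1 l1 true p1 K N).
    + apply (Ev_mono _ _ (fun a Da A B => A (pt_up K _ _ B (hevS a f2 Da l2) (meet_lb2 H _ _)))).
      exact (IHf2 l2 true p2 K N).
  - destruct Hl as [_ [l1 l2]]. destruct Hp as [p1 p2]. intros [A B].
    apply (Ev_mono _ _ (fun a Da C => pt_meet K _ _ (proj1 C) (proj2 C))).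
    apply Ev_and; [exact (IHf1 l1 false p1 K A)|exact (IHf2 l2 false p2 K B)].
  -
    destruct Hl as [LO [l1 l2]]. destruct Hp as [p1 p2]. intros N.
    apply not_or_and in N. destruct N as [A B].
    apply (Ev_mono (fun a => ~ pt K (hev a f1) /\ ~ pt K (hev a f2))).
    + intros a Da [C1 C2] C. destruct (prime_or H S L HS HL (pt K) (hev a f1) (hev a f2) (pt_mirr H S K) LO)
        as [E|E]; auto; apply hevS; auto.
    + apply Ev_and; [exact (IHf1 l1 true p1 K A)|exact (IHf2 l2 true p2 K B)].
  - destruct Hl as [LO [l1 l2]]. destruct Hp as [p1 p2]. intros [A|B].
    + apply (Ev_mono _ _ (fun a Da C => pt_up K _ _ C (S_or H S L HS _ _ LO (hevS a f1 Da l1) (hevS a f2 Da l2)) (join_ub1 H _ _))).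
      exact (IHf1 l1 false p1 K A).
    + apply (Ev_mono _ _ (fun a Da C => pt_up K _ _ C (S_or H S L HS _ _ LO (hevS a f1 Da l1) (hevS a f2 Da l2)) (join_ub2 H _ _))).
      exact (IHf2 l2 false p2 K B).
  -
    destruct Hl as [LI [l1 l2]]. destruct Hp as [p1 p2]. intros N.
    apply NNPP in N. destruct N as [G [KG [A B]]].
    apply (Ev_mono (fun a => pt G (hev a f1) /\ ~ pt G (hev a f2))).
    + intros a Da [C1 C2] C. apply C2. apply (pt_up G (hmeet H (hev a f1) (himp H (hev a f1) (hev a f2)))).
      * apply pt_meet; [exact C1|apply KG; exact C].
      * apply hevS; auto.
      * apply mp.
    + apply Ev_and; [exact (IHf1 l1 false p1 G A)|exact (IHf2 l2 true p2 G B)].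
  -
    destruct Hl as [LI [l1 l2]]. destruct Hp as [p1 p2]. intros Hi.
    destruct (classic (exists a0, D a0 /\ pt K (hev a0 (Imp f1 f2)))) as [[a0 [D0 K0]]|NE].
    + exists a0. split; auto. intros a Da aa0. apply (pt_up K _ _ K0).
      * apply hevS; auto. simpl; auto.
      * apply (hev_mono a a0 aa0 (Imp f1 f2) false). simpl; auto.
    + destruct (ZH K (fun a => hev a f1) (fun a => hev a f2)) as [G [KG [G1 G2]]].
      * intros a Da. split; [apply hevS; auto|]. split; [apply hevS; auto|].
        apply S_imp with (L := L); auto; apply hevS; auto.
      * intros a c Da Dc ca. split; [apply (hev_mono c a ca f1 true p1)|apply (hev_mono c a ca f2 false p2)].
      * intros a Da C. apply NE. exists a; split; auto.
      * exfalso. apply Hi. exists G. split; auto. split.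
        -- apply NNPP; intro N1. destruct (Ev_ex _ (IHf1 l1 true p1 G N1)) as [a [Da C]]. apply C, G1; auto.
        -- intro N2. destruct (Ev_ex _ (IHf2 l2 false p2 G N2)) as [a [Da C]]. apply (G2 a Da C).
  -
    destruct Hl as [LN l1]. intros N. apply NNPP in N. destruct N as [G [KG [A _]]].
    apply (Ev_mono (fun a => pt G (hev a f))).
    + intros a Da C1 C. apply (pt_nobot H S G). rewrite <- (meet_neg H (hev a f)). apply pt_meet; [exact C1|apply KG; exact C].
    + exact (IHf l1 false Hp G A).
  -
    destruct Hl as [LN l1]. intros Hi.
    destruct (classic (exists a0, D a0 /\ pt K (hev a0 (Neg f)))) as [[a0 [D0 K0]]|NE].
    + exists a0. split; auto. intros a Da aa0. apply (pt_up K _ _ K0).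
      * apply hevS; auto. simpl; auto.
      * apply (hev_mono a a0 aa0 (Neg f) false). simpl; auto.
    + destruct (ZH K (fun a => hev a f) (fun a => hbot H)) as [G [KG [G1 G2]]].
      * intros a Da. split; [apply hevS; auto|]. split; [apply (S_bot_neg H S L HS HL LN)|].
        apply S_neg with (L := L); auto; apply hevS; auto.
      * intros a c Da Dc ca. split; [apply (hev_mono c a ca f true Hp)|apply hle_refl].
      * intros a Da C. apply NE. exists a; split; auto.
      * exfalso. apply Hi. exists G. split; auto. split; auto.
        apply NNPP; intro N1. destruct (Ev_ex _ (IHf l1 true Hp G N1)) as [a [Da C]]. apply C, G1; auto.
  -
    intros _. apply Ev_all. intros a Da. apply pt_nobot.
  - intros [].
  - intros N; exfalso; apply N; exact I.
  -
    intros _. apply Ev_all. intros a Da. exact (f_top H S (pt K) (pt_f H S K) (S_top H S L HS Hl)).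
Qed.

Lemma ANT : forall g, sahl_ant g -> in_lang L g -> forall K : X, WE g K -> Ev (fun a => pt K (hev a g)).
Proof.
  induction 1; intros Hl K; unfold WE, UE; simpl.
  - intros A. apply Ev_all. intros a Da. apply A; auto.
  - intros A. apply (PN f Hl false H0 K A).
  - intros [].
  - intros _. apply Ev_all. intros a Da. exact (f_top H S (pt K) (pt_f H S K) (S_top H S L HS Hl)).
  - destruct Hl as [_ [l1 l2]]. intros [A B].
    apply (Ev_mono _ _ (fun a Da C => pt_meet K _ _ (proj1 C) (proj2 C))).
    apply Ev_and; [exact (IHsahl_ant1 l1 K A)|exact (IHsahl_ant2 l2 K B)].
  - destruct Hl as [LO [l1 l2]]. intros [A|B].
    + apply (Ev_mono _ _ (fun x Dx C => pt_up K _ _ C (S_or H S L HS _ _ LO (hevS x a Dx l1) (hevS x b Dx l2)) (join_ub1 H _ _))).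
      exact (IHsahl_ant1 l1 K A).
    + apply (Ev_mono _ _ (fun x Dx C => pt_up K _ _ C (S_or H S L HS _ _ LO (hevS x a Dx l1) (hevS x b Dx l2)) (join_ub2 H _ _))).
      exact (IHsahl_ant2 l2 K B).
Qed.

Lemma IMPL : forall f, sahl_impl f -> in_lang L f -> forall K : X, ~ WE f K -> Ev (fun a => ~ pt K (hev a f)).
Proof.
  intros f [Hp|[[g [E Hg]]|[g [h [E [Hg Hh]]]]]] Hl K; [exact (PN f Hl true Hp K)| |]; subst;
    unfold WE, UE; simpl in *.
  - destruct Hl as [LN l1]. intros N. apply NNPP in N. destruct N as [G [KG [A _]]].
    apply (Ev_mono (fun a => pt G (hev a g))).
    + intros a Da C1 C. apply (pt_nobot H S G). rewrite <- (meet_neg H (hev a g)). apply pt_meet; [exact C1|apply KG; exact C].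
    + exact (ANT g Hg l1 G A).
  - destruct Hl as [LI [l1 l2]]. intros N.
    apply NNPP in N. destruct N as [G [KG [A B]]].
    apply (Ev_mono (fun a => pt G (hev a g) /\ ~ pt G (hev a h))).
    + intros a Da [C1 C2] C. apply C2. apply (pt_up G (hmeet H (hev a g) (himp H (hev a g) (hev a h)))).
      * apply pt_meet; [exact C1|apply KG; exact C].
      * apply hevS; auto.
      * apply mp.
    + apply Ev_and; [exact (ANT g Hg l1 G A)|exact (PN h l2 true Hh G B)].
Qed.

Lemma COMB : forall f, sahl_comb f -> in_lang L f -> forall K : X, ~ WE f K -> Ev (fun a => ~ pt K (hev a f)).
Proof.
  induction 1; intros Hl K; [apply IMPL; auto| |]; unfold WE, UE; simpl in *.
  - destruct Hl as [_ [l1 l2]]. intros N.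
    apply not_and_or in N. destruct N as [N|N].
    + apply (Ev_mono _ _ (fun a' Da A B => A (pt_up K _ _ B (hevS a' a Da l1) (meet_lb1 H _ _)))).
      exact (IHsahl_comb1 l1 K N).
    + apply (Ev_mono _ _ (fun a' Da A B => A (pt_up K _ _ B (hevS a' b Da l2) (meet_lb2 H _ _)))).
      exact (IHsahl_comb2 l2 K N).
  - destruct Hl as [LO [l1 l2]]. intros N.
    apply not_or_and in N. destruct N as [A B].
    apply (Ev_mono (fun x => ~ pt K (hev x a) /\ ~ pt K (hev x b))).
    + intros x Dx [C1 C2] C. destruct (prime_or H S L HS HL (pt K) (hev x a) (hev x b) (pt_mirr H S K) LO)
        as [E|E]; auto; apply hevS; auto.
    + apply Ev_and; [exact (IHsahl_comb1 l1 K A)|exact (IHsahl_comb2 l2 K B)].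
Qed.

Lemma LISTC : forall prems : list fm, (forall phi, In phi prems -> sahl_comb phi /\ in_lang L phi) ->
  forall K : X, (forall phi, In phi prems -> ~ WE phi K) ->
  Ev (fun a => forall phi, In phi prems -> ~ pt K (hev a phi)).
Proof.
  induction prems as [|phi rest IH]; intros Hp K Hn.
  - apply Ev_all. intros a Da phi [].
  - apply (Ev_mono (fun a => ~ pt K (hev a phi) /\ forall phi, In phi rest -> ~ pt K (hev a phi))).
    + intros a Da [A B] phi' [<-|I]; auto.
    + apply Ev_and.
      * destruct (Hp phi (or_introl eq_refl)). apply COMB; auto. apply Hn; simpl; auto.
      * apply IH; auto. intros; apply Hp; simpl; auto. intros; apply Hn; simpl; auto.
Qed.

End Dir.
Lemma eval_ext {T} (o : ops T) v w f : (forall n, occurs n f -> v n = w n) -> eval o v f = eval o w f.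
Proof.
  induction f; simpl; intros E; try reflexivity.
  - apply E; reflexivity.
  - rewrite IHf1, IHf2; auto.
  - rewrite IHf1, IHf2; auto.
  - rewrite IHf1, IHf2; auto.
  - rewrite IHf; auto.
Qed.

Section Build.
Variable H : HA.
Variable S : H -> Prop.
Variable L : sym -> Prop.
Hypothesis HS : subreduct L H S.
Hypothesis HL : L SAnd.

Notation X := (Astar H S).
Notation le := (Astar_le H S).
Notation pt := (pt H S).

Variable V : nat -> X -> Prop.
Hypothesis HV : forall n, is_upset le (V n).
Notation UV := (UE H S V).

Lemma ANTB : forall g, sahl_ant g -> in_lang L g -> forall K, UV g K ->
  exists ns : list nat, (forall n, In n ns -> V n K) /\
   forall W, (forall n, In n ns -> W n K) ->
     (forall c, negative c -> in_lang L c -> UV c K -> UE H S W c K) -> UE H S W g K.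
Proof.
  induction 1; intros Hl K; unfold UE; simpl.
  - intros A. exists [n]. split; [intros m [<-|[]]; auto|]. intros W HW _. apply HW; simpl; auto.
  - intros A. exists []. split; [intros m []|]. intros W _ HN. apply HN; auto.
  - intros [].
  - intros _. exists []. split; [intros m []|]. intros; exact I.
  - destruct Hl as [_ [l1 l2]]. intros [A B].
    destruct (IHsahl_ant1 l1 K A) as [n1 [V1 W1]]. destruct (IHsahl_ant2 l2 K B) as [n2 [V2 W2]].
    exists (n1 ++ n2). split.
    + intros n I. apply in_app_or in I. destruct I; auto.
    + intros W HW HN. split; [apply W1|apply W2]; auto; intros; apply HW; apply in_or_app; auto.
  - destruct Hl as [_ [l1 l2]]. intros [A|B].
    + destruct (IHsahl_ant1 l1 K A) as [n1 [V1 W1]]. exists n1. split; auto. intros; left; apply W1; auto.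
    + destruct (IHsahl_ant2 l2 K B) as [n1 [V1 W1]]. exists n1. split; auto. intros; right; apply W1; auto.
Qed.

Definition mkws (ns : list nat) (G : X) : list (nat * X) := map (fun n => (n, G)) ns.

Lemma mkws_in ns G p : In p (mkws ns G) -> In (fst p) ns /\ snd p = G.
Proof.
  unfold mkws. intros I. apply in_map_iff in I. destruct I as [n [<- I]]. simpl; auto.
Qed.

Lemma mkws_in2 ns G n : In n ns -> In (n, G) (mkws ns G).
Proof. intros I. unfold mkws. apply in_map_iff. exists n; auto. Qed.

Lemma IMPA : forall f, sahl_impl f -> in_lang L f -> forall F, ~ UV f F ->
  exists ws : list (nat * X), (forall p, In p ws -> le F (snd p) /\ V (fst p) (snd p)) /\
   (ws = [] \/ L SImp \/ L SNeg) /\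
   forall W, (forall p, In p ws -> W (fst p) (snd p)) -> (forall n K, W n K -> V n K) -> ~ UE H S W f F.
Proof.
  intros f [Hp|[[g [E Hg]]|[g [h [E [Hg Hh]]]]]] Hl F NF.
  - exists []. split; [intros p []|]. split; [left; auto|]. intros W _ WV A. apply NF.
    apply (eval_mono_up H S W V WV f true Hp); auto.
  - subst. destruct Hl as [LN l1]. unfold UE in NF; simpl in NF.
    apply NNPP in NF. destruct NF as [G [FG [A _]]].
    destruct (ANTB g Hg l1 G A) as [ns [Vns Wns]].
    exists (mkws ns G). split; [|split; [right; right; auto|]].
    + intros p I. apply mkws_in in I. destruct I as [I E]. rewrite E. split; auto.
    + intros W HW WV. unfold UE; simpl. intros Hi. apply Hi. exists G. split; auto. split; auto.
      apply Wns.
      * intros n I. apply (HW (n, G)). apply mkws_in2; auto.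
      * intros c Hc lc C. apply (eval_mono_up H S W V WV c false Hc); auto.
  - subst. destruct Hl as [LI [l1 l2]]. unfold UE in NF; simpl in NF.
    apply NNPP in NF. destruct NF as [G [FG [A B]]].
    destruct (ANTB g Hg l1 G A) as [ns [Vns Wns]].
    exists (mkws ns G). split; [|split; [right; left; auto|]].
    + intros p I. apply mkws_in in I. destruct I as [I E]. rewrite E. split; auto.
    + intros W HW WV. unfold UE; simpl. intros Hi. apply Hi. exists G. split; auto. split.
      * apply Wns.
        -- intros n I. apply (HW (n, G)). apply mkws_in2; auto.
        -- intros c Hc lc C. apply (eval_mono_up H S W V WV c false Hc); auto.
      * intro C. apply B. apply (eval_mono_up H S W V WV h true Hh); auto.
Qed.

Lemma COMBA : forall f, sahl_comb f -> in_lang L f -> forall F, ~ UV f F ->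
  exists ws : list (nat * X), (forall p, In p ws -> le F (snd p) /\ V (fst p) (snd p)) /\
   (ws = [] \/ L SImp \/ L SNeg) /\
   forall W, (forall p, In p ws -> W (fst p) (snd p)) -> (forall n K, W n K -> V n K) -> ~ UE H S W f F.
Proof.
  induction 1; intros Hl F NF; [apply IMPA; auto| |]; unfold UE in *; simpl in *.
  - destruct Hl as [_ [l1 l2]]. apply not_and_or in NF. destruct NF as [N|N].
    + destruct (IHsahl_comb1 l1 F N) as [ws [A [B C]]]. exists ws. split; auto. split; auto.
      intros W HW WV [D1 D2]. apply (C W HW WV D1).
    + destruct (IHsahl_comb2 l2 F N) as [ws [A [B C]]]. exists ws. split; auto. split; auto.
      intros W HW WV [D1 D2]. apply (C W HW WV D2).
  - destruct Hl as [_ [l1 l2]]. apply not_or_and in NF. destruct NF as [N1 N2].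
    destruct (IHsahl_comb1 l1 F N1) as [ws1 [A1 [B1 C1]]].
    destruct (IHsahl_comb2 l2 F N2) as [ws2 [A2 [B2 C2]]].
    exists (ws1 ++ ws2). split; [|split].
    + intros p I. apply in_app_or in I. destruct I; auto.
    + destruct ws1; [destruct B2 as [->|B2]; [left; auto|right; auto]|].
      destruct B1 as [E|B1]; [discriminate|right; auto].
    + intros W HW WV [D1|D2].
      * apply (C1 W); auto. intros; apply HW; apply in_or_app; auto.
      * apply (C2 W); auto. intros; apply HW; apply in_or_app; auto.
Qed.

Lemma LISTA : forall prems, (forall phi, In phi prems -> sahl_comb phi /\ in_lang L phi) ->
  forall F, (forall phi, In phi prems -> ~ UV phi F) ->
  exists ws : list (nat * X), (forall p, In p ws -> le F (snd p) /\ V (fst p) (snd p)) /\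
   (ws = [] \/ L SImp \/ L SNeg) /\
   forall W, (forall p, In p ws -> W (fst p) (snd p)) -> (forall n K, W n K -> V n K) ->
     forall phi, In phi prems -> ~ UE H S W phi F.
Proof.
  induction prems as [|phi rest IH]; intros Hp F Hn.
  - exists []. split; [intros p []|]. split; [left; auto|]. intros W _ _ phi [].
  - destruct (Hp phi (or_introl eq_refl)) as [c l].
    destruct (COMBA phi c l F (Hn phi (or_introl eq_refl))) as [ws1 [A1 [B1 C1]]].
    destruct (IH (fun q I => Hp q (or_intror I)) F (fun q I => Hn q (or_intror I))) as [ws2 [A2 [B2 C2]]].
    exists (ws1 ++ ws2). split; [|split].
    + intros p I. apply in_app_or in I. destruct I; auto.
    + destruct ws1; [destruct B2 as [->|B2]; [left; auto|right; auto]|].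
      destruct B1 as [E|B1]; [discriminate|right; auto].
    + intros W HW WV q [<-|I].
      * apply (C1 W); auto. intros; apply HW; apply in_or_app; auto.
      * apply (C2 W); auto. intros; apply HW; apply in_or_app; auto.
Qed.

Lemma FLEM (F : X) W : L SNeg -> ~ L SImp -> (forall n, is_upset le (W n)) ->
  (forall n M, maxf H S (pt M) -> W n M -> V n M) -> (forall n, W n F -> V n F) ->
  forall p, in_lang L p -> polar true p -> UE H S W p F -> UV p F.
Proof.
  intros LN NI HW Hmax HF p; induction p; intros Hl Hp; unfold UE in *; simpl in *; try discriminate.
  - apply HF.
  - destruct Hl as [_ [l1 l2]]. destruct Hp. intros [A B]; split; auto.
  - destruct Hl as [_ [l1 l2]]. destruct Hp. intros [A|B]; [left|right]; auto.
  - destruct Hl as [LI _]. contradiction.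
  - destruct Hl as [_ l1]. intros Hi [y [Fy [A _]]]. apply Hi.
    destruct (exists_maxf H S L HS HL (pt y) LN (pt_f H S y) (pt_nobot H S y)) as [M [mM [xM yM]]].
    set (Mx := exist _ M mM : X).
    assert (yMx : le y Mx) by (intros z; apply yM).
    exists Mx. split; [eapply le_transX; eauto|]. split; auto.
    apply (max_lemma H S W V HW HV Hmax p false Hp Mx xM).
    apply (eval_upset H S V HV p y Mx A yMx).
  - intros [].
  - intros _; exact I.
Qed.

Lemma IMPB : forall f, sahl_impl f -> in_lang L f -> L SNeg -> ~ L SImp -> forall F, ~ UV f F ->
  exists ws : list (nat * X), (forall p, In p ws -> le F (snd p) /\ V (fst p) (snd p) /\ maxf H S (pt (snd p))) /\
   forall W, (forall n, is_upset le (W n)) -> (forall p, In p ws -> W (fst p) (snd p)) ->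
     (forall n M, maxf H S (pt M) -> W n M -> V n M) -> (forall n, W n F -> V n F) -> ~ UE H S W f F.
Proof.
  intros f [Hp|[[g [E Hg]]|[g [h [E [Hg Hh]]]]]] Hl LN NI F NF.
  - exists []. split; [intros p []|]. intros W HW _ Hmax HF A. apply NF.
    apply (FLEM F W LN NI HW Hmax HF f Hl Hp A).
  - subst. destruct Hl as [_ l1]. unfold UE in NF; simpl in NF.
    apply NNPP in NF. destruct NF as [G [FG [A _]]].
    destruct (exists_maxf H S L HS HL (pt G) LN (pt_f H S G) (pt_nobot H S G)) as [M [mM [xM GM]]].
    set (Mx := exist _ M mM : X).
    assert (GMx : le G Mx) by (intros z; apply GM).
    assert (A' : UV g Mx) by (apply (eval_upset H S V HV g G Mx A GMx)).
    destruct (ANTB g Hg l1 Mx A') as [ns [Vns Wns]].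
    exists (mkws ns Mx). split.
    + intros p I. apply mkws_in in I. destruct I as [I E]. rewrite E. split; [eapply le_transX; eauto|]. split; auto.
    + intros W HW HWs Hmax HF. unfold UE; simpl. intros Hi. apply Hi. exists Mx. split; [eapply le_transX; eauto|]. split; auto.
      apply Wns.
      * intros n I. apply (HWs (n, Mx)). apply mkws_in2; auto.
      * intros c Hc lc C. apply (max_lemma H S W V HW HV Hmax c false Hc Mx xM); auto.
  - subst. destruct Hl as [LI _]. contradiction.
Qed.

Lemma COMBB : forall f, sahl_comb f -> in_lang L f -> L SNeg -> ~ L SImp -> forall F, ~ UV f F ->
  exists ws : list (nat * X), (forall p, In p ws -> le F (snd p) /\ V (fst p) (snd p) /\ maxf H S (pt (snd p))) /\
   forall W, (forall n, is_upset le (W n)) -> (forall p, In p ws -> W (fst p) (snd p)) ->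
     (forall n M, maxf H S (pt M) -> W n M -> V n M) -> (forall n, W n F -> V n F) -> ~ UE H S W f F.
Proof.
  induction 1; intros Hl LN NI F NF; [apply IMPB; auto| |]; unfold UE in *; simpl in *.
  - destruct Hl as [_ [l1 l2]]. apply not_and_or in NF. destruct NF as [N|N].
    + destruct (IHsahl_comb1 l1 LN NI F N) as [ws [A C]]. exists ws. split; auto.
      intros W HW HWs Hmax HF [D1 D2]. apply (C W HW HWs Hmax HF D1).
    + destruct (IHsahl_comb2 l2 LN NI F N) as [ws [A C]]. exists ws. split; auto.
      intros W HW HWs Hmax HF [D1 D2]. apply (C W HW HWs Hmax HF D2).
  - destruct Hl as [_ [l1 l2]]. apply not_or_and in NF. destruct NF as [N1 N2].
    destruct (IHsahl_comb1 l1 LN NI F N1) as [ws1 [A1 C1]].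
    destruct (IHsahl_comb2 l2 LN NI F N2) as [ws2 [A2 C2]].
    exists (ws1 ++ ws2). split.
    + intros p I. apply in_app_or in I. destruct I; auto.
    + intros W HW HWs Hmax HF [D1|D2].
      * apply (C1 W); auto. intros; apply HWs; apply in_or_app; auto.
      * apply (C2 W); auto. intros; apply HWs; apply in_or_app; auto.
Qed.

Lemma LISTB : forall prems, (forall phi, In phi prems -> sahl_comb phi /\ in_lang L phi) -> L SNeg -> ~ L SImp ->
  forall F, (forall phi, In phi prems -> ~ UV phi F) ->
  exists ws : list (nat * X), (forall p, In p ws -> le F (snd p) /\ V (fst p) (snd p) /\ maxf H S (pt (snd p))) /\
   forall W, (forall n, is_upset le (W n)) -> (forall p, In p ws -> W (fst p) (snd p)) ->
     (forall n M, maxf H S (pt M) -> W n M -> V n M) -> (forall n, W n F -> V n F) ->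
     forall phi, In phi prems -> ~ UE H S W phi F.
Proof.
  induction prems as [|phi rest IH]; intros Hp LN NI F Hn.
  - exists []. split; [intros p []|]. intros W _ _ _ _ phi [].
  - destruct (Hp phi (or_introl eq_refl)) as [c l].
    destruct (COMBB phi c l LN NI F (Hn phi (or_introl eq_refl))) as [ws1 [A1 C1]].
    destruct (IH (fun q I => Hp q (or_intror I)) LN NI F (fun q I => Hn q (or_intror I))) as [ws2 [A2 C2]].
    exists (ws1 ++ ws2). split.
    + intros p I. apply in_app_or in I. destruct I; auto.
    + intros W HW HWs Hmax HF q [<-|I].
      * apply (C1 W); auto. intros; apply HWs; apply in_or_app; auto.
      * apply (C2 W); auto. intros; apply HWs; apply in_or_app; auto.
Qed.

End Build.
Section Core.
Variable H : HA.
Variable S : H -> Prop.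
Variable L : sym -> Prop.
Hypothesis HS : subreduct L H S.
Hypothesis HL : L SAnd.

Notation X := (Astar H S).
Notation le := (Astar_le H S).
Notation pt := (pt H S).

Definition Dws (ws : list (nat * X)) (a : nat -> H) : Prop :=
  forall n, S (a n) /\ forall p : nat * X, In p ws -> fst p = n -> pt (snd p) (a n).

Lemma Dws_dir ws a b : Dws ws a -> Dws ws b -> exists c, Dws ws c /\ vle H c a /\ vle H c b.
Proof.
  intros Da Db. exists (fun n => hmeet H (a n) (b n)). split; [|split; intro n; [apply meet_lb1|apply meet_lb2]].
  intros n. destruct (Da n) as [Sa Pa]. destruct (Db n) as [Sb Pb].
  split; [apply (S_and H S L HS HL); auto|]. intros p I E.
  apply (f_meet H S _ (pt_f H S (snd p))); auto.
Qed.

Lemma Dws_S ws a : Dws ws a -> forall n, S (a n).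
Proof. intros Da n; apply Da. Qed.

Lemma Dws_ne ws t : S t -> (forall p, In p ws -> pt (snd p) t) -> exists a, Dws ws a.
Proof. intros St Ht. exists (fun _ => t). intros n; split; auto. Qed.

Lemma WD_ws ws p : In p ws -> WD H S (Dws ws) (fst p) (snd p).
Proof. intros I a Da. apply (Da (fst p)); auto. Qed.

Lemma WD_C ws a0 n (K : X) : Dws ws a0 -> WD H S (Dws ws) n K ->
  forall x, S x -> (forall p : nat * X, In p ws -> fst p = n -> pt (snd p) x) -> pt K x.
Proof.
  intros D0 HK x Sx Hx.
  set (a := fun m => if PeanoNat.Nat.eq_dec m n then x else a0 m).
  assert (Da : Dws ws a).
  { intros m. unfold a. destruct (PeanoNat.Nat.eq_dec m n) as [E|E].
    - subst. split; auto.
    - apply D0. }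
  specialize (HK a Da). unfold a in HK. destruct (PeanoNat.Nat.eq_dec n n) as [_|E]; [exact HK|contradiction].
Qed.

Lemma ws_prime ws n (K B : H -> Prop) : fS H S K -> (exists s, S s /\ ~ K s) -> (forall x, B x -> S x) ->
  (forall p : nat * X, In p ws -> fst p = n -> forall x, B x -> pt (snd p) x) ->
  (exists t0, S t0 /\ forall p : nat * X, In p ws -> fst p = n -> pt (snd p) t0) ->
  (ws = [] \/ TF H S K B) ->
  (forall x, S x -> (forall p : nat * X, In p ws -> fst p = n -> pt (snd p) x) -> K x) ->
  exists p : nat * X, In p ws /\ fst p = n /\ forall x, pt (snd p) x -> K x.
Proof.
  intros fK PK BS HB [t0 [St0 Ht0]] HT HI.
  set (Gs := map (fun p : nat * X => pt (snd p)) (List.filter (fun p : nat * X => Nat.eqb (fst p) n) ws)).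
  assert (GsI : forall G, In G Gs -> exists p, In p ws /\ fst p = n /\ G = pt (snd p)).
  { intros G I. unfold Gs in I. apply in_map_iff in I. destruct I as [p [E I]].
    apply filter_In in I. destruct I as [I E2]. apply PeanoNat.Nat.eqb_eq in E2. exists p; auto. }
  assert (GsI2 : forall p, In p ws -> fst p = n -> In (pt (snd p)) Gs).
  { intros p I E. unfold Gs. apply in_map_iff. exists p. split; auto. apply filter_In. split; auto.
    apply PeanoNat.Nat.eqb_eq; auto. }
  destruct (list_prime H S L HS HL K B fK PK BS Gs) as [G [IG HG]].
  - intros G I. destruct (GsI G I) as [p [Ip [Ep ->]]]. split; [apply pt_f|]. apply HB; auto.
  - exists t0. split; auto. intros G I. destruct (GsI G I) as [p [Ip [Ep ->]]]. apply Ht0; auto.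
  - destruct HT as [->|HT]; [left; reflexivity|right; auto].
  - intros x Sx Hx. apply HI; auto. intros p I E. apply Hx. apply GsI2; auto.
  - destruct (GsI G IG) as [p [Ip [Ep ->]]]. exists p; auto.
Qed.

Lemma CORE prems (F : X) (V : nat -> X -> Prop) : (forall n, is_upset le (V n)) ->
  (forall phi, In phi prems -> sahl_comb phi /\ in_lang L phi) ->
  (forall phi, In phi prems -> ~ UE H S V phi F) ->
  exists a, (forall n, S (a n)) /\ forall phi, In phi prems -> ~ pt F (hev H a phi).
Proof.
  intros HV Hok Hn.
  destruct (classic (L SOr \/ L SImp \/ ~ L SNeg)) as [CA|CB].
  - destruct (LISTA H S L V prems Hok F Hn) as [ws [Aw [Bw Cw]]].
    assert (t0 : exists t, S t /\ (ws = [] \/ forall K : X, pt K t)).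
    { destruct ws as [|p ws'].
      - destruct (S_ne H S L HS) as [s Ss]. exists s; auto.
      - assert (St : S (htop H)).
        { destruct Bw as [E|[LI|LN]]; [discriminate|apply (S_top_imp H S L HS LI)|apply (S_top_neg H S L HS HL LN)]. }
        exists (htop H). split; auto. right. intros K. apply (f_top H S _ (pt_f H S K) St). }
    destruct t0 as [t [St Ht]].
    assert (Dne : exists a, Dws ws a).
    { apply (Dws_ne ws t St). intros p I. destruct Ht as [->|Ht]; [destruct I|apply Ht]. }
    assert (WV : forall n K, WD H S (Dws ws) n K -> V n K).
    { intros n K HK. destruct Dne as [a0 D0].
      destruct (ws_prime ws n (pt K) (fun _ => False) (pt_f H S K) (pt_proper H S K)) as [p [Ip [Ep Hp]]].
      - intros x [].
      - intros p _ _ x [].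
      - exists t. split; auto. intros p I _. destruct Ht as [->|Ht]; [destruct I|apply Ht].
      - destruct ws as [|p0 ws']; [left; reflexivity|right].
        destruct CA as [LO|[LI|NN]].
        + apply (TF_or H S L HS HL); auto. apply pt_mirr.
        + apply (TF_imp H S L HS HL); auto. apply pt_mirr.
        + destruct Bw as [E|[LI|LN]]; [discriminate| |contradiction].
          apply (TF_imp H S L HS HL); auto. apply pt_mirr.
      - apply (WD_C ws a0 n K D0 HK).
      - rewrite <- Ep. apply (HV (fst p) (snd p) K); [apply Aw; auto|]. intros x; apply Hp. }
    assert (NW := Cw (WD H S (Dws ws)) (fun p I => WD_ws ws p I) WV).
    destruct (Ev_ex H _ _ (LISTC H S L HS HL (Dws ws) Dne (Dws_dir ws) (Dws_S ws) prems Hok F NW)) as [a [Da Ha]].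
    exists a. split; [apply Dws_S with ws; auto|exact Ha].
  - apply not_or_and in CB. destruct CB as [NO CB]. apply not_or_and in CB. destruct CB as [NI LN].
    apply NNPP in LN.
    destruct (LISTB H S L HS HL V HV prems Hok LN NI F Hn) as [ws [Aw Cw]].
    assert (St : S (htop H)) by (apply (S_top_neg H S L HS HL LN)).
    assert (Ht : forall K : X, pt K (htop H)) by (intros K; apply (f_top H S _ (pt_f H S K) St)).
    assert (Dne : exists a, Dws ws a) by (apply (Dws_ne ws (htop H) St); intros; apply Ht).
    destruct Dne as [a0 D0].
    assert (Hmax : forall n M, maxf H S (pt M) -> WD H S (Dws ws) n M -> V n M).
    { intros n M HM HK.
      destruct (ws_prime ws n (pt M) (fun _ => False) (pt_f H S M) (pt_proper H S M)) as [p [Ip [Ep Hp]]].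
      - intros x [].
      - intros p _ _ x [].
      - exists (htop H). split; auto.
      - right. apply (TF_max H S L HS HL); auto.
      - apply (WD_C ws a0 n M D0 HK).
      - rewrite <- Ep. apply (HV (fst p) (snd p) M); [apply Aw; auto|]. intros x; apply Hp. }
    assert (HF : forall n, WD H S (Dws ws) n F -> V n F).
    { intros n HK.
      destruct (ws_prime ws n (pt F) (pt F) (pt_f H S F) (pt_proper H S F)) as [p [Ip [Ep Hp]]].
      - intros x Fx. apply (f_S H S _ (pt_f H S F) x Fx).
      - intros p I _ x Fx. apply (Aw p I); auto.
      - exists (htop H). split; auto.
      - right. apply TF_irr. apply pt_mirr.
      - apply (WD_C ws a0 n F D0 HK).
      - rewrite <- Ep. apply (HV (fst p) (snd p) F); [apply Aw; auto|]. intros x; apply Hp. }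
    assert (NW := Cw (WD H S (Dws ws)) (WD_upset H S (Dws ws)) (fun p I => WD_ws ws p I) Hmax HF).
    destruct (Ev_ex H _ _ (LISTC H S L HS HL (Dws ws) (ex_intro _ a0 D0) (Dws_dir ws) (Dws_S ws) prems Hok F NW)) as [a [Da Ha]].
    exists a. split; [apply Dws_S with ws; auto|exact Ha].
Qed.

Lemma FINAL (F : X) a prems : (forall n, S (a n)) -> (forall phi, In phi prems -> in_lang L phi) ->
  (forall phi, In phi prems -> ~ pt F (hev H a phi)) ->
  exists y z, S y /\ S z /\ (forall phi, In phi prems -> hle H (hmeet H (hev H a phi) y) z) /\ ~ hle H y z.
Proof.
  intros Sa Hl Hn.
  assert (fF := pt_f H S F).
  destruct (f_ne H S _ fF) as [f0 Hf0].
  set (Gs := map (fun phi => gen H S (pt F) (hev H a phi)) prems).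
  assert (GsI : forall G, In G Gs -> exists phi, In phi prems /\ G = gen H S (pt F) (hev H a phi)).
  { intros G I. unfold Gs in I. apply in_map_iff in I. destruct I as [phi [E I]]. exists phi; auto. }
  assert (hS : forall phi, In phi prems -> S (hev H a phi)) by (intros; apply (eval_S H S L HS HL); auto).
  destruct (classic (forall x, S x -> (forall G, In G Gs -> G x) -> pt F x)) as [All|NAll].
  - exfalso.
    destruct (list_prime H S L HS HL (pt F) (pt F) fF (pt_proper H S F) (fun x Fx => f_S H S _ fF x Fx) Gs)
      as [G [IG HG]].
    + intros G I. destruct (GsI G I) as [phi [Ip ->]]. split; [apply (gen_filter H S L HS HL); auto|].
      apply gen_sup; auto.
    + exists f0. split; [apply (f_S H S _ fF f0 Hf0)|]. intros G I. destruct (GsI G I) as [phi [Ip ->]].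
      apply gen_sup; auto.
    + right. apply TF_irr. apply pt_mirr.
    + exact All.
    + destruct (GsI G IG) as [phi [Ip ->]]. apply (Hn phi Ip). apply HG. apply gen_a; auto.
  - apply not_all_ex_not in NAll. destruct NAll as [z Nz].
    apply imply_to_and in Nz. destruct Nz as [Sz Nz]. apply imply_to_and in Nz. destruct Nz as [Gz Fz].
    assert (Y : forall ps, (forall phi, In phi ps -> In phi prems) ->
               exists y, pt F y /\ forall phi, In phi ps -> hle H (hmeet H (hev H a phi) y) z).
    { induction ps as [|phi ps IH]; intros Hps.
      - exists f0. split; auto. intros phi [].
      - destruct IH as [yr [Fyr Hyr]]; [intros; apply Hps; simpl; auto|].
        assert (Ip : In phi prems) by (apply Hps; simpl; auto).
        assert (Gp : gen H S (pt F) (hev H a phi) z).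
        { apply Gz. unfold Gs. apply in_map_iff. exists phi; auto. }
        destruct Gp as [_ [k [Fk Hk]]].
        exists (hmeet H k yr). split; [apply (f_meet H S _ fF); auto|].
        intros phi' [<-|I].
        + eapply hle_trans; [|exact Hk]. apply meet_glb.
          * eapply hle_trans; [apply meet_lb2|apply meet_lb1].
          * apply meet_lb1.
        + eapply hle_trans; [|apply (Hyr phi' I)]. apply meet_mono; [apply hle_refl|apply meet_lb2]. }
    destruct (Y prems (fun phi I => I)) as [y [Fy Hy]].
    exists y, z. split; [apply (f_S H S _ fF y Fy)|]. split; auto. split; auto.
    intros yz. apply Fz. apply (f_up H S _ fF y z); auto.
Qed.

End Core.

Theorem theorem5p1 (L : sym -> Prop) (HL : L SAnd) (q : quasieq)
  (Hq : sahlqvist_qe L q) (H : HA) (S : H -> Prop) (HS : subreduct L H S) :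
  sub_validates H S q -> Up_validates (Astar_le H S) q.
Proof.
  intros Hsub. destruct Hq as [Hyz Hok].
  unfold Up_validates, valid_qe. intros V HV Hprem x. simpl in *.
  split; [intros [A _]; exact A|]. intros Vy. split; [exact Vy|]. apply NNPP; intro Nz.
  assert (Hn : forall phi, In phi (qe_prems q) -> ~ UE H S V phi x).
  { intros phi I A. apply Nz. apply (proj2 (Hprem phi I x)). split; auto. }
  assert (Hok' : forall phi, In phi (qe_prems q) -> sahl_comb phi /\ in_lang L phi).
  { intros phi I. destruct (Hok phi I) as [A [B _]]. auto. }
  destruct (CORE H S L HS HL (qe_prems q) x V HV Hok' Hn) as [a [Sa Ha]].
  destruct (FINAL H S L HS HL x a (qe_prems q) Sa (fun phi I => proj2 (Hok' phi I)) Ha)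
    as [yv [zv [Sy [Sz [Hyzv Nyz]]]]].
  apply Nyz.
  set (v' := fun m => if Nat.eqb m (qe_y q) then yv else if Nat.eqb m (qe_z q) then zv else a m).
  assert (vy : v' (qe_y q) = yv) by (unfold v'; rewrite PeanoNat.Nat.eqb_refl; reflexivity).
  assert (vz : v' (qe_z q) = zv).
  { unfold v'. destruct (Nat.eqb (qe_z q) (qe_y q)) eqn:E.
    - apply PeanoNat.Nat.eqb_eq in E. exfalso; apply Hyz; auto.
    - rewrite PeanoNat.Nat.eqb_refl; reflexivity. }
  assert (ve : forall phi, In phi (qe_prems q) -> eval (HA_ops H) v' phi = hev H a phi).
  { intros phi I. destruct (Hok phi I) as [_ [_ [Ny Nz']]]. unfold hev. apply eval_ext.
    intros n On. unfold v'. destruct (Nat.eqb n (qe_y q)) eqn:E1.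
    - apply PeanoNat.Nat.eqb_eq in E1; rewrite E1 in On; contradiction.
    - destruct (Nat.eqb n (qe_z q)) eqn:E2; [apply PeanoNat.Nat.eqb_eq in E2; rewrite E2 in On; contradiction|reflexivity]. }
  unfold hle. rewrite <- vy, <- vz. apply (Hsub v').
  - intros n. unfold v'. destruct (Nat.eqb n (qe_y q)); [exact Sy|]. destruct (Nat.eqb n (qe_z q)); auto.
  - intros phi I. simpl. rewrite (ve phi I), vy, vz. apply Hyzv; auto.
Qed.
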